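(* Let $t$ be a positive integer and let $G$ be a finite group (not necessarily abelian, written additively) such that the smallest prime divisor $p$ of $|G|$ satisfies $p>t$. Let $a_1,\dots,a_n$ be distinct non-identity elements of $G$ and let $M_1=[a_1^{\alpha_1},\dots,a_n^{\alpha_n}]$ and $M_2=[a_1^{\beta_1},\dots,a_n^{\beta_n}]$ be multisets (with nonnegative integer multiplicities $\alpha_i,\beta_i$). Assume that the underlying set of $M_2$ (i.e. $\{a_i:\beta_i>0\}$) has size larger than $2t^2$. Then there is a $t$-weakly sequenceable multiset $M_3$ such that $M_1\subseteq M_3\subseteq M_1\cup M_2$ and $|M_3\setminus M_1|\leq t^2$.
   Context: $[a_1^{\lambda_1},\dots,a_n^{\lambda_n}]$ denotes the multiset containing $a_i$ with multiplicity $\lambda_i$. For multisets, $\subseteq$ means multiplicity-wise inequality, $M_1\cup M_2$ is the multiset whose multiplicity of $a_i$ is $\alpha_i+\beta_i$, and $M_3\setminus M_1$ is the multiset difference (multiplicities subtracted); $|\cdot|$ is the size counted with multiplicity. Given a multiset $M$ of size $m$, a $t$-weak ordering (or $t$-weak sequencing) of $M$ is a sequence $(y_1,\dots,y_m)$ in which each element of $M$ appears exactly as many times as its multiplicity, such that the partial sums $s_0=0$, $s_i=y_1+y_2+\dots+y_i$ ($1\le i\le m$, summed left to right) satisfy $s_i\neq s_j$ whenever $0\le i<j\le m$ and $j-i\le t$. $M$ is $t$-weakly sequenceable if it admits a $t$-weak ordering. *)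

(* Defs.v *)
From mathcomp Require Import all_boot all_fingroup.
Set Implicit Arguments. Unset Strict Implicit. Unset Printing Implicit Defensive.
Local Open Scope group_scope.

(* The group G is the whole of a finGroupType gT; its (possibly non-abelian)
   operation, written additively in the paper, is the group product here. *)

Definition partial_sum (gT : finGroupType) (s : seq gT) (i : nat) : gT :=
  \prod_(x <- take i s) x.

Definition t_weak_seq (gT : finGroupType) (t : nat) (s : seq gT) : Prop :=
  forall i j : nat, (i < j)%N -> (j <= size s)%N -> (j - i <= t)%N ->
    partial_sum s i != partial_sum s j.

(* a multiset is represented by any seq listing its elements with multiplicity *)
Definition t_weakly_sequenceable (gT : finGroupType) (t : nat) (M : seq gT) : Prop :=
  exists s : seq gT, perm_eq s M /\ t_weak_seq t s.

Definition mset_of (gT : finGroupType) (n : nat) (a : 'I_n -> gT) (g : 'I_n -> nat)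
  : seq gT := flatten [seq nseq (g i) (a i) | i <- enum 'I_n].

(* Main.v *)
Require Import Defs.
From mathcomp Require Import all_boot all_fingroup all_solvable zify.
Set Implicit Arguments. Unset Strict Implicit. Unset Printing Implicit Defensive.
Local Open Scope group_scope.

Lemma ps_cat_le (gT : finGroupType) (s u : seq gT) i :
  (i <= size s)%N -> partial_sum (s ++ u) i = partial_sum s i.
Proof.
move=> H; rewrite /partial_sum take_cat.
case: ltnP => H2 //. have -> : i = size s by apply/eqP; rewrite eqn_leq H H2.
by rewrite subnn take0 cats0 take_size.
Qed.

Lemma ps_cat_ge (gT : finGroupType) (s u : seq gT) j :
  (size s <= j)%N -> partial_sum (s ++ u) j = partial_sum s (size s) * partial_sum u (j - size s).
Proof.
move=> H; rewrite /partial_sum take_cat ltnNge H /= big_cat /= take_size //.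
Qed.

Lemma prod_nseq (gT : finGroupType) (x : gT) n : \prod_(y <- nseq n x) y = x ^+ n.
Proof. elim: n => [|n IH]; first by rewrite big_nil expg0.
by rewrite /= big_cons IH expgS. Qed.

Lemma ps_nseq (gT : finGroupType) (x : gT) L k : partial_sum (nseq L x) k = x ^+ minn k L.
Proof.
rewrite /partial_sum -prod_nseq; congr (\prod_(y <- _) y).
elim: L k => [|L IH] [|k] //=. by rewrite IH minnSS.
Qed.

Definition win (m t : nat) := iota (m - t.-1) (m - (m - t.-1)).

Lemma mem_win m t i : (0 < t)%N -> (i \in win m t) = (i < m)%N && (m < i + t)%N.
Proof.
move=> Ht. rewrite mem_iota. apply/idP/idP; move/andP=>[H1 H2]; apply/andP; split; lia. Qed.

Lemma size_win m t : (size (win m t) <= t.-1)%N.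
Proof. rewrite size_iota; lia. Qed.

Definition good (gT : finGroupType) (t : nat) (s : seq gT) (L : nat) (x : gT) : bool :=
  all (fun k => all (fun i => partial_sum s i != partial_sum s (size s) * x ^+ k) (win (size s) t))
      (iota 1 (minn L t.-1)).

Lemma tw_block (gT : finGroupType) t (s : seq gT) L x :
  (0 < t)%N -> t_weak_seq t s -> (forall k, (0 < k)%N -> (k <= t)%N -> x ^+ k != 1) ->
  good t s L x -> t_weak_seq t (s ++ nseq L x).
Proof.
move=> Ht Hs Hx Hg i j Hij; rewrite size_cat size_nseq => Hj Hd.
set m := size s.
case: (leqP j m) => Hjm.
  rewrite !ps_cat_le //; [apply Hs => // | apply: leq_trans Hjm; exact: ltnW].
case: (leqP m i) => Him.
  rewrite !ps_cat_ge ?(ltnW Hjm) // !ps_nseq.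
  have -> : minn (i - m) L = i - m by lia.
  have -> : minn (j - m) L = j - m by lia.
  apply/negP => /eqP /mulgI E.
  have E2 : x ^+ (j - m) = x ^+ (i - m) * x ^+ (j - i) by rewrite -expgD; congr (x ^+ _); lia.
  move: E2; rewrite -E -{1}(mulg1 (x ^+ (i - m))) => /mulgI E3.
  by move: (Hx (j - i) ltac:(lia) Hd); rewrite -E3 eqxx.
rewrite ps_cat_le ?(ltnW Him) // ps_cat_ge ?(ltnW Hjm) // ps_nseq.
have -> : minn (j - m) L = j - m by lia.
move/allP: Hg => /(_ (j - m)).
rewrite mem_iota => /(_ ltac:(lia)) /allP /(_ i).
by rewrite mem_win // => /(_ ltac:(lia)).
Qed.

Definition badAll (gT : finGroupType) t (s : seq gT) :=
  [seq ((partial_sum s (size s))^-1 * partial_sum s i) ^+ expg_invn [set: gT] k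
    | k <- iota 1 t.-1, i <- win (size s) t].

Lemma size_badAll (gT : finGroupType) t (s : seq gT) : (size (badAll t s) <= t.-1 * t.-1)%N.
Proof. rewrite size_allpairs size_iota leq_mul2l size_win orbT //. Qed.

Lemma bad_gen (gT : finGroupType) t (s : seq gT) L x :
  (forall k, (0 < k)%N -> (k <= t)%N -> coprime #|[set: gT]| k) ->
  ~~ good t s L x -> x \in badAll t s.
Proof.
move=> Hc /allPn [k]; rewrite mem_iota => Hk /allPn [i Hi]; rewrite negbK => /eqP E.
have -> : x = (x ^+ k) ^+ expg_invn [set: gT] k.
  by rewrite (expgK (Hc k ltac:(lia) ltac:(lia))) ?inE.
have -> : x ^+ k = (partial_sum s (size s))^-1 * partial_sum s i by rewrite E mulKg.
apply: allpairs_f => //; rewrite mem_iota; lia.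
Qed.

Definition bad1 (gT : finGroupType) t (s : seq gT) :=
  [seq (partial_sum s (size s))^-1 * partial_sum s i | i <- win (size s) t].

Lemma bad_one (gT : finGroupType) t (s : seq gT) z :
  ~~ good t s 1 z -> z \in bad1 t s.
Proof.
move=> /allPn [k]; rewrite mem_iota => Hk /allPn [i Hi]; rewrite negbK => /eqP E.
have Ek : k = 1%N by lia.
move: E; rewrite Ek expg1 => E.
have -> : z = (partial_sum s (size s))^-1 * partial_sum s i by rewrite E mulKg.
exact: map_f.
Qed.

Definition badSep (gT : finGroupType) t (s : seq gT) (x : gT) :=
  [seq (partial_sum s (size s))^-1 * partial_sum s i * (x ^+ k)^-1
    | k <- iota 1 t.-1, i <- win (size s).+1 t].

Lemma size_badSep (gT : finGroupType) t (s : seq gT) x : (size (badSep t s x) <= t.-1 * t.-1)%N.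
Proof. rewrite size_allpairs size_iota leq_mul2l size_win orbT //. Qed.

Lemma bad_sep (gT : finGroupType) t (s : seq gT) L x z :
  (0 < t)%N -> ~~ good t (s ++ [:: z]) L x -> z \in badSep t s x.
Proof.
move=> Ht /allPn [k]; rewrite mem_iota => Hk /allPn [i Hi]; rewrite negbK => /eqP E.
move: Hi; rewrite size_cat addn1 => Hi.
move: E; rewrite mem_win // in Hi.
rewrite ps_cat_le ?size_cat; last lia.
rewrite ps_cat_ge ?size_cat; last lia.
rewrite addn1 subSnn /partial_sum /= big_cons big_nil mulg1 -/(partial_sum s i) -/(partial_sum s (size s)) => E.
have -> : z = (partial_sum s (size s))^-1 * partial_sum s i * (x ^+ k)^-1 by rewrite E !mulgA mulVg mul1g mulgK.
apply: allpairs_f; rewrite ?mem_iota ?mem_win //; lia.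
Qed.

Lemma size_bad1 (gT : finGroupType) t (s : seq gT) : (size (bad1 t s) <= t.-1)%N.
Proof. by rewrite size_map size_win. Qed.

Lemma ordt (gT : finGroupType) t :
  (forall p : nat, prime p -> p %| #|[set: gT]| -> t < p)%N ->
  forall x : gT, x != 1 -> forall k, (0 < k)%N -> (k <= t)%N -> x ^+ k != 1.
Proof.
move=> Hp x Hx k Hk Hkt; apply/negP => /eqP E.
have H1 : (1 < #[x])%N by have := order_gt0 x; have := order_eq1 x; rewrite (negbTE Hx); lia.
have Hd : (#[x] %| k)%N by rewrite order_dvdn E.
have Hg : (#[x] %| #|[set: gT]|)%N by apply: order_dvdG; rewrite inE.
have := Hp _ (pdiv_prime H1) (dvdn_trans (pdiv_dvd _) Hg).
have := dvdn_leq Hk (dvdn_trans (pdiv_dvd _) Hd). lia.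
Qed.

Lemma copt (gT : finGroupType) t :
  (forall p : nat, prime p -> p %| #|[set: gT]| -> t < p)%N ->
  forall k, (0 < k)%N -> (k <= t)%N -> coprime #|[set: gT]| k.
Proof.
move=> Hp k Hk Hkt; rewrite /coprime; apply/negPn/negP => Hg.
have H1 : (1 < gcdn #|[set: gT]| k)%N.
  have : (0 < gcdn #|[set: gT]| k)%N by rewrite gcdn_gt0 Hk orbT.
  move: Hg; case: (gcdn _ _) => [|[|g]] //=.
have := Hp _ (pdiv_prime H1) (dvdn_trans (pdiv_dvd _) (dvdn_gcdl _ _)).
have := dvdn_leq Hk (dvdn_trans (pdiv_dvd _) (dvdn_gcdr #|[set: gT]| k)). lia.
Qed.

Definition blk (gT : finGroupType) (u : seq (gT * nat)) := flatten [seq nseq b.2 b.1 | b <- u].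

Lemma phase2 (gT : finGroupType) t (zs : seq gT) :
  (0 < t)%N ->
  (forall x : gT, x != 1 -> forall k, (0 < k)%N -> (k <= t)%N -> x ^+ k != 1) ->
  uniq zs -> (forall z, z \in zs -> z != 1) -> (2 * t ^ 2 < size zs)%N ->
  forall (u : seq (gT * nat)) (s used : seq gT),
  t_weak_seq t s -> all (fun b => b.1 != 1) u -> uniq used ->
  (size used + size u <= t.-1 * t.-1)%N ->
  exists out sp, [/\ t_weak_seq t out, perm_eq out (s ++ blk u ++ sp), uniq (used ++ sp),
     {subset sp <= zs} & (size (used ++ sp) <= t.-1 * t.-1)%N].
Proof.
move=> Ht Hord Hzs Hz1 Hsz; elim=> [|[x L] u IH] s used Hs Hu Hused Hsize.
  exists s, [::]; split => //; rewrite ?cats0 //; move: Hsize; rewrite addn0 //.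
move: Hu => /= /andP [Hx1 Hu].
set F := used ++ bad1 t s ++ badSep t s x.
have [z Hz HzF] : exists2 z, z \in zs & z \notin F.
  apply/allPn; apply/negP => /allP Hall.
  have := uniq_leq_size Hzs Hall.
  rewrite !size_cat.
  have := size_bad1 t s; have := size_badSep t s x.
  move: Hsize Hsz => /=. nia.
move: HzF; rewrite !mem_cat !negb_or => /and3P [Hzu Hz1b Hz2b].
have G1 : good t s 1 z by apply/negP => /negP /bad_one; rewrite (negbTE Hz1b).
have G2 : good t (s ++ [:: z]) L x by apply/negP => /negP /(bad_sep Ht); rewrite (negbTE Hz2b).
have T1 : t_weak_seq t (s ++ [:: z]) by apply: (tw_block (L := 1)) => //; apply: Hord; apply: Hz1.
have T2 := tw_block Ht T1 (Hord _ Hx1) G2.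
have [||out [sp [O1 O2 O3 O4 O5]]] := IH _ (z :: used) T2 Hu.
- by rewrite /= Hzu.
- move: Hsize => /=; lia.
exists out, (z :: sp); split => //.
- apply: (perm_trans O2). rewrite /blk /= -/(blk u) -!catA /=.
  rewrite perm_cat2l.
  have -> : nseq L x ++ blk u ++ z :: sp = (nseq L x ++ blk u) ++ [:: z] ++ sp by rewrite -catA.
  have -> : z :: nseq L x ++ blk u ++ sp = [:: z] ++ (nseq L x ++ blk u) ++ sp by rewrite -catA.
  by rewrite perm_catCA.
- by rewrite -cat1s uniq_catCA.
- by move=> y; rewrite inE => /orP [/eqP -> //|]; apply: O4.
- move: O5; rewrite !size_cat /=; lia.
Qed.

Lemma phase1 (gT : finGroupType) t (zs : seq gT) :
  (0 < t)%N ->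
  (forall x : gT, x != 1 -> forall k, (0 < k)%N -> (k <= t)%N -> x ^+ k != 1) ->
  (forall k, (0 < k)%N -> (k <= t)%N -> coprime #|[set: gT]| k) ->
  uniq zs -> (forall z, z \in zs -> z != 1) -> (2 * t ^ 2 < size zs)%N ->
  forall N (u : seq (gT * nat)) (s : seq gT),
  (size u <= N)%N -> t_weak_seq t s -> all (fun b => b.1 != 1) u -> uniq (map fst u) ->
  exists out sp, [/\ t_weak_seq t out, perm_eq out (s ++ blk u ++ sp), uniq sp,
     {subset sp <= zs} & (size sp <= t.-1 * t.-1)%N].
Proof.
move=> Ht Hord Hc Hzs Hz1 Hsz; elim=> [|N IH] u s Hn Hs Hu Hun.
  move: Hn; rewrite leqn0 size_eq0 => /eqP ->.
  by exists s, [::]; split => //; rewrite /blk /= cats0.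
have [/hasP [b Hb Hg]|Hng] := boolP (has (fun b => good t s b.2 b.1) u).
  have Ts := tw_block Ht Hs (Hord _ (allP Hu b Hb)) Hg.
  have [|||out [sp [O1 O2 O3 O4 O5]]] := IH (rem b u) (s ++ nseq b.2 b.1) _ Ts.
  - by rewrite size_rem // -subn1 leq_subLR add1n.
  - by apply/allP => y /mem_rem; apply: (allP Hu).
  - exact: subseq_uniq (map_subseq _ (rem_subseq _ _)) Hun.
  exists out, sp; split => //.
  apply: (perm_trans O2); rewrite -catA perm_cat2l catA perm_cat2r perm_sym.
  exact: (perm_flatten (perm_map (fun b => nseq b.2 b.1) (perm_to_rem Hb))).
have Hsu : (size u <= t.-1 * t.-1)%N.
  rewrite -(size_map fst); apply: (leq_trans _ (size_badAll t s)).
  apply: (uniq_leq_size Hun) => y /mapP [b Hb ->].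
  apply: (bad_gen (L := b.2)) Hc _.
  by apply: contra Hng => Hg; apply/hasP; exists b.
have [out [sp [O1 O2 O3 O4 O5]]] := phase2 Ht Hord Hzs Hz1 Hsz Hs Hu (erefl true : uniq [::]) Hsu.
by exists out, sp.
Qed.

Lemma flat_cat (T : eqType) (I : Type) (E : seq I) (f g : I -> seq T) :
  perm_eq (flatten [seq f i ++ g i | i <- E]) (flatten (map f E) ++ flatten (map g E)).
Proof.
elim: E => [|e E IH] //=.
rewrite -!catA perm_cat2l.
apply: (@perm_trans _ (g e ++ (flatten (map f E) ++ flatten (map g E)))).
  by rewrite perm_cat2l.
by rewrite perm_catCA.
Qed.

Lemma flat_filter (T : Type) (I : Type) (E : seq I) (P : pred I) (a : I -> T) :
  flatten [seq nseq (P i) (a i) | i <- E] = map a (filter P E).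
Proof. elim: E => [|e E IH] //=; case: (P e) => //=; rewrite IH //. Qed.

Lemma sum_count (I : Type) (E : seq I) (P : pred I) : (\sum_(i <- E) (P i : nat))%N = count P E.
Proof. elim: E => [|e E IH]; rewrite ?big_nil ?big_cons ?IH //. Qed.

Lemma tw_nil (gT : finGroupType) t : t_weak_seq t ([::] : seq gT).
Proof. move=> i j Hij Hj; have := leq_trans Hij Hj; by []. Qed.

Theorem proposition2p2 (gT : finGroupType) (t : nat) (n : nat)
    (a : 'I_n -> gT) (alpha beta : 'I_n -> nat) :
  (0 < t)%N ->
  (forall p : nat, prime p -> p %| #|[set: gT]| -> t < p)%N ->
  injective a ->
  (forall i, a i != 1%g) ->
  (2 * t ^ 2 < #|[set i | (0 < beta i)%N]|)%N ->
  exists gamma : 'I_n -> nat,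
    [/\ forall i, (alpha i <= gamma i <= alpha i + beta i)%N,
        (\sum_(i < n) (gamma i - alpha i) <= t ^ 2)%N &
        t_weakly_sequenceable t (mset_of a gamma)].
Proof.
move=> Ht Hp Hinj Ha1 Hbeta.
have Hord := ordt Hp. have Hc := copt Hp.
set A := [set i | (0 < beta i)%N].
set zs := map a (enum A).
have Hzs : uniq zs by rewrite map_inj_uniq // enum_uniq.
have Hz1 : forall z, z \in zs -> z != 1 by move=> z /mapP [j _ ->]; apply: Ha1.
have Hsz : (2 * t ^ 2 < size zs)%N by rewrite size_map -cardE.
set u := [seq (a i, alpha i) | i <- enum 'I_n].
have Hu : all (fun b => b.1 != 1) u by apply/allP => b /mapP [i _ ->]; apply: Ha1.
have Hnil := @tw_nil gT t.
have Hun : uniq (map fst u).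
  have -> : map fst u = map a (enum 'I_n) by rewrite -map_comp.
  by rewrite map_inj_uniq // enum_uniq.
have [out [sp [O1 O2 O3 O4 O5]]] := phase1 Ht Hord Hc Hzs Hz1 Hsz (leqnn (size u)) Hnil Hu Hun.
have Hblk : blk u = mset_of a alpha by rewrite /blk /mset_of -map_comp.
set E := enum 'I_n.
set P := fun i => a i \in sp.
have Hperm : perm_eq (map a (filter P E)) sp.
  apply: uniq_perm => //; first by rewrite map_inj_uniq // filter_uniq // enum_uniq.
  move=> x; apply/idP/idP.
    by move=> /mapP [i]; rewrite mem_filter => /andP [Hi _] ->.
  move=> Hx; have := O4 _ Hx => /mapP [j _ Ej].
  by rewrite Ej map_f // mem_filter mem_enum andbT /P -Ej.
exists (fun i => alpha i + P i)%N; split.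
- move=> i; rewrite leq_addr leq_add2l /=.
  case HP : (P i) => //=.
  have := O4 _ HP => /mapP [j Hj /Hinj Ej].
  by move: Hj; rewrite mem_enum inE -Ej.
- rewrite (eq_bigr (fun i => (P i : nat))); last by move=> i _; rewrite addKn.
  rewrite -big_enum /= sum_count -size_filter -(size_map a) (perm_size Hperm).
  apply: (leq_trans O5); rewrite -mulnn; apply: leq_mul; lia.
- exists out; split => //.
  apply: (perm_trans O2); rewrite cat0s Hblk perm_sym.
  rewrite /mset_of (eq_map (fun i => nseqD (alpha i) (P i) (a i))).
  apply: (perm_trans (flat_cat _ _ _)).
  by rewrite perm_cat2l flat_filter.
Qed.
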